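(* Let $\lambda>0$, $d_{\mathrm H},d_{\mathrm V}>0$ and positive integers $N_{\mathrm H},N_{\mathrm V}$, $N=N_{\mathrm H}N_{\mathrm V}$. For $n=1,\dots,N$ let $i(n)=\mathrm{mod}(n-1,N_{\mathrm H})$, $j(n)=\lfloor (n-1)/N_{\mathrm H}\rfloor$ and $\mathbf u_n=[0,\ i(n)d_{\mathrm H},\ j(n)d_{\mathrm V}]^{\mathrm T}\in\mathbb R^3$. For angles $(\varphi,\theta)$ define the wave vector $\mathbf k(\varphi,\theta)=\frac{2\pi}{\lambda}[\cos\theta\cos\varphi,\ \cos\theta\sin\varphi,\ \sin\theta]^{\mathrm T}$ and the array response vector $\mathbf a(\varphi,\theta)=[e^{\mathrm i\,\mathbf k(\varphi,\theta)^{\mathrm T}\mathbf u_1},\dots,e^{\mathrm i\,\mathbf k(\varphi,\theta)^{\mathrm T}\mathbf u_N}]^{\mathrm T}\in\mathbb C^N$. Let $(\varphi,\theta)$ be random with probability density $f(\varphi,\theta)=\frac{\cos\theta}{2\pi}$ on $[-\pi/2,\pi/2]\times[-\pi/2,\pi/2]$ (isotropic scattering in the half-space in front of the surface), and let $\mathbf R=\mathbb E\{\mathbf a(\varphi,\theta)\mathbf a(\varphi,\theta)^{\mathrm H}\}\in\mathbb C^{N\times N}$. Then for all $n,m\in\{1,\dots,N\}$, $$[\mathbf R]_{n,m}=\mathrm{sinc}\!\left(\frac{2\|\mathbf u_n-\mathbf u_m\|}{\lambda}\right),$$ where $\mathrm{sinc}(x)=\sin(\pi x)/(\pi x)$ (with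 $\mathrm{sinc}(0)=1$).
   Context: This models a reconfigurable intelligent surface (RIS) of $N$ elements of size $d_{\mathrm H}\times d_{\mathrm V}$ placed edge-to-edge on a rectangular grid in the $yz$-plane, indexed row by row; $\lambda$ is the wavelength; $\varphi$ is the azimuth and $\theta$ the elevation angle of an impinging plane wave; $\mathrm i$ is the imaginary unit and ${}^{\mathrm H}$ denotes conjugate transpose. *)

(* Defs.v *)
From Stdlib Require Import Reals Lra Lia.
From Coquelicot Require Import Coquelicot.
Open Scope R_scope.

Definition cexpi (x : R) : C := (cos x, sin x).

Definition vec3 := (R * R * R)%type.
Definition dot3 (a b : vec3) : R :=
  let '(a1, a2, a3) := a in let '(b1, b2, b3) := b in a1*b1 + a2*b2 + a3*b3.
Definition sub3 (a b : vec3) : vec3 :=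
  let '(a1, a2, a3) := a in let '(b1, b2, b3) := b in (a1-b1, a2-b2, a3-b3).
Definition norm3 (a : vec3) : R := sqrt (dot3 a a).

Definition idx_i (NH n : nat) : nat := Nat.modulo (n - 1) NH.
Definition idx_j (NH n : nat) : nat := Nat.div (n - 1) NH.

Definition u_pos (dH dV : R) (NH n : nat) : vec3 :=
  (0, INR (idx_i NH n) * dH, INR (idx_j NH n) * dV).

Definition wavevec (lam phi theta : R) : vec3 :=
  (2*PI/lam * (cos theta * cos phi), 2*PI/lam * (cos theta * sin phi),
   2*PI/lam * sin theta).

Definition a_resp (lam dH dV : R) (NH n : nat) (phi theta : R) : C :=
  cexpi (dot3 (wavevec lam phi theta) (u_pos dH dV NH n)).

Definition pdf (phi theta : R) : R := cos theta / (2*PI).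

(* [R]_{n,m} = E{ a_n conj(a_m) } = double integral over [-pi/2,pi/2]^2
   (iterated: inner over phi, outer over theta) of a_n conj(a_m) f. *)
Definition Rcorr (lam dH dV : R) (NH n m : nat) : C :=
  RInt (V := C_R_CompleteNormedModule)
    (fun theta => RInt (V := C_R_CompleteNormedModule)
       (fun phi => Cmult (RtoC (pdf phi theta))
                     (Cmult (a_resp lam dH dV NH n phi theta)
                            (Cconj (a_resp lam dH dV NH m phi theta))))
       (-(PI/2)) (PI/2))
    (-(PI/2)) (PI/2).

Definition sinc (x : R) : R :=
  if Req_EM_T x 0 then 1 else sin (PI * x) / (PI * x).

(* Main.v *)
Require Import Defs.
From Stdlib Require Import Reals Lra Lia Nsatz Factorial.
From Coquelicot Require Import Coquelicot.
Open Scope R_scope.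


Lemma isR_plus (f g : R -> R) a b If Ig :
  is_RInt f a b If -> is_RInt g a b Ig -> is_RInt (fun x => f x + g x) a b (If + Ig).
Proof. intros H1 H2. exact (is_RInt_plus _ _ _ _ _ _ H1 H2). Qed.
Lemma isR_minus (f g : R -> R) a b If Ig :
  is_RInt f a b If -> is_RInt g a b Ig -> is_RInt (fun x => f x - g x) a b (If - Ig).
Proof. intros H1 H2. exact (is_RInt_minus _ _ _ _ _ _ H1 H2). Qed.
Lemma isR_scal (f : R -> R) a b k If :
  is_RInt f a b If -> is_RInt (fun x => k * f x) a b (k * If).
Proof. intros H1. exact (is_RInt_scal _ _ _ _ _ H1). Qed.

Lemma c2d_pow f x y n : continuity_2d_pt f x y -> continuity_2d_pt (fun u v => f u v ^ n) x y.
Proof.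
  intros H. induction n as [|n IH]; simpl.
  - apply continuity_2d_pt_const.
  - apply continuity_2d_pt_mult; auto.
Qed.
Lemma c2d_cos f x y : continuity_2d_pt f x y -> continuity_2d_pt (fun u v => cos (f u v)) x y.
Proof. intros H. apply (continuity_1d_2d_pt_comp cos f); auto. apply continuity_cos. Qed.
Lemma c2d_sin f x y : continuity_2d_pt f x y -> continuity_2d_pt (fun u v => sin (f u v)) x y.
Proof. intros H. apply (continuity_1d_2d_pt_comp sin f); auto. apply continuity_sin. Qed.

Ltac c2d := repeat first
  [ apply continuity_2d_pt_const | apply continuity_2d_pt_id1 | apply continuity_2d_pt_id2
  | apply continuity_2d_pt_plus | apply continuity_2d_pt_minus | apply continuity_2d_pt_mult
  | apply continuity_2d_pt_opp | apply c2d_pow | apply c2d_cos | apply c2d_sin ].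

Lemma c2d_snd (F : R -> R -> R) th ph :
  continuity_2d_pt F th ph -> continuous (F th) ph.
Proof.
  intros H. apply filterlim_locally. intros eps.
  destruct (H eps) as [d Hd]. exists d. intros t Ht.
  change (Rabs (F th t - F th ph) < eps).
  apply Hd. rewrite Rminus_diag, Rabs_R0. apply cond_pos. exact Ht.
Qed.

Lemma ex_param (F : R -> R -> R) a b :
  (forall th ph, continuity_2d_pt F th ph) -> forall th, ex_RInt (F th) a b.
Proof.
  intros H th. apply (ex_RInt_continuous (V:=R_CompleteNormedModule)). intros z _. apply c2d_snd, H.
Qed.

Lemma cont_param (F : R -> R -> R) a b : a <= b ->
  (forall th ph, continuity_2d_pt F th ph) ->
  forall th0, continuous (fun th => RInt (F th) a b) th0.
Proof.
  intros Hab H th0.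
  apply filterlim_locally. intros eps.
  assert (He : 0 < eps / (b - a + 1)).
  { apply Rdiv_lt_0_compat. apply cond_pos. lra. }
  destruct (uniform_continuity_2d_1d' F a b th0 (fun x _ => H th0 x) (mkposreal _ He)) as [d Hd].
  exists d. intros th Hth.
  change (Rabs (RInt (F th) a b - RInt (F th0) a b) < eps).
  assert (Hth' : Rabs (th - th0) < d).
  { change (Rabs (th + - th0) < d). exact Hth. }
  rewrite <- (RInt_minus (F th) (F th0)) by (apply ex_param; auto).
  eapply Rle_lt_trans.
  apply (abs_RInt_le_const _ a b (eps / (b - a + 1))); auto.
  apply ex_RInt_minus; apply ex_param; auto.
  intros t Ht. left.
  apply (Hd t th0 t th); try lra.
  - pose proof (cond_pos d); lra.
  - apply Rabs_le_between'. left. exact Hth'.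
  - rewrite Rminus_diag, Rabs_R0. apply cond_pos.
  - pose proof (cond_pos eps).
    apply Rlt_le_trans with ((b - a + 1) * (eps / (b - a + 1))).
    apply Rmult_lt_compat_r. auto. lra.
    right. field. lra.
Qed.

Lemma der_param (F DF : R -> R -> R) a b :
  (forall th ph, is_derive (fun u => F u ph) th (DF th ph)) ->
  (forall th ph, continuity_2d_pt DF th ph) ->
  (forall th ph, continuity_2d_pt F th ph) ->
  forall th, is_derive (fun th => RInt (F th) a b) th (RInt (DF th) a b).
Proof.
  intros HD HDc Hc th.
  assert (E : forall u t, Derive (fun z => F z t) u = DF u t).
  { intros u t. apply is_derive_unique. apply HD. }
  replace (RInt (DF th) a b) with (RInt (fun t => Derive (fun u => F u t) th) a b).
  2:{ apply RInt_ext. intros; apply E. }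
  apply (is_derive_RInt_param F a b th).
  - apply filter_forall. intros x t _. eexists. apply HD.
  - intros t _. eapply continuity_2d_pt_ext. 2: apply (HDc th t).
    intros; simpl. rewrite E. reflexivity.
  - apply filter_forall. intros y. apply ex_param. auto.
Qed.

Ltac rring := match goal with |- ?l = ?r => change (@eq R l r) end; ring.

Definition X al be th ph := al * (cos th * sin ph) + be * sin th.
Definition Xt al be th ph := - (al * (sin th * sin ph)) + be * cos th.
Definition Du al be k (th ph : R) :=
  (INR k + 2) * ((INR k + 1) * X al be th ph ^ k * (al * cos th * cos ph) * (al * cos ph)
     - X al be th ph ^ (S k) * al * sin ph).
Definition Dv al be k (th ph : R) :=
  (INR k + 2) * ((INR k + 1) * X al be th ph ^ k * Xt al be th ph * cos th * Xt al be th ph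
     + X al be th ph ^ (S k) * (- sin th * Xt al be th ph - cos th * X al be th ph)).

Lemma key_id al be k th ph :
  Du al be k th ph + Dv al be k th ph =
  cos th * ((INR k + 2) * (INR k + 1) * (al^2 + be^2) * X al be th ph ^ k
            - (INR k + 2) * (INR k + 3) * X al be th ph ^ (S (S k))).
Proof.
  unfold Du, Dv. cbn [pow].
  set (Y := X al be th ph ^ k). unfold Xt, X.
  pose proof (sin2_cos2 th) as H1. pose proof (sin2_cos2 ph) as H2.
  unfold Rsqr in H1, H2.
  set (K := INR k) in *.
  nsatz.
Qed.
Definition u al be k (th ph : R) := (INR k + 2) * X al be th ph ^ (S k) * al * cos ph.
Definition v al be k (th ph : R) := (INR k + 2) * X al be th ph ^ (S k) * cos th * Xt al be th ph.

Lemma u_der al be k th ph : is_derive (fun p => u al be k th p) ph (Du al be k th ph).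
Proof.
  unfold u, Du, Xt, X. auto_derive; auto.
  replace (match k with 0%nat => 1 | S _ => INR k + 1 end) with (INR k + 1)
    by (destruct k; simpl; ring).
  cbn [pow]. ring.
Qed.
Lemma v_der al be k th ph : is_derive (fun t => v al be k t ph) th (Dv al be k th ph).
Proof.
  unfold v, Dv, Xt, X. auto_derive; auto.
  replace (match k with 0%nat => 1 | S _ => INR k + 1 end) with (INR k + 1)
    by (destruct k; simpl; ring).
  cbn [pow]. ring.
Qed.

Definition P al be k th := RInt (fun ph => cos th * X al be th ph ^ k) (-(PI/2)) (PI/2).

Lemma contP al be n th ph : continuity_2d_pt (fun t p => cos t * X al be t p ^ n) th ph.
Proof. unfold X. c2d. Qed.

Lemma cos_mPI2 : cos (-(PI/2)) = 0.
Proof. rewrite cos_neg. apply cos_PI2. Qed.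

Lemma rec al be k M : is_RInt (P al be k) (-(PI/2)) (PI/2) M ->
  is_RInt (P al be (S (S k))) (-(PI/2)) (PI/2) ((INR k+1)*(al^2+be^2)*M/(INR k+3)).
Proof.
  intros HM.
  set (a := -(PI/2)) in *. set (b := PI/2) in *.
  assert (Hab : a <= b) by (unfold a, b; pose proof PI_RGT_0; lra).
  pose proof (pos_INR k) as Hk.
  set (c1 := (INR k + 2) * (INR k + 1) * (al^2 + be^2)).
  set (c2 := (INR k + 2) * (INR k + 3)).
  set (W := fun th => RInt (Dv al be k th) a b).
  assert (cDv : forall th ph, continuity_2d_pt (Dv al be k) th ph).
  { intros. unfold Dv, X, Xt. c2d. }
  assert (cDu : forall th ph, continuity_2d_pt (Du al be k) th ph).
  { intros. unfold Du, X. c2d. }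
  assert (cv : forall th ph, continuity_2d_pt (v al be k) th ph).
  { intros. unfold v, X, Xt. c2d. }
  assert (eqW : forall th, c1 * P al be k th - c2 * P al be (S (S k)) th = W th).
  { intro th.
    set (f := fun ph => cos th * ((INR k + 2) * (INR k + 1) * (al^2 + be^2) * X al be th ph ^ k
            - (INR k + 2) * (INR k + 3) * X al be th ph ^ (S (S k)))).
    assert (H1 : is_RInt f a b (0 + W th)).
    { apply is_RInt_ext with (fun ph => Du al be k th ph + Dv al be k th ph).
      { intros; unfold f; apply key_id. }
      apply isR_plus.
      - replace 0 with (minus (u al be k th b) (u al be k th a)).
        + apply (is_RInt_derive (V:=R_CompleteNormedModule) (fun p => u al be k th p)).
          * intros; apply u_der.
          * intros. apply c2d_snd. apply cDu.
        + unfold u, a, b, minus, plus, opp; simpl. rewrite cos_PI2, cos_mPI2. ring.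
      - apply (RInt_correct (V:=R_CompleteNormedModule)). apply ex_param. exact cDv. }
    assert (H2 : is_RInt f a b (c1 * P al be k th - c2 * P al be (S (S k)) th)).
    { apply is_RInt_ext with (fun ph => c1 * (cos th * X al be th ph ^ k)
          - c2 * (cos th * X al be th ph ^ (S (S k)))).
      { intros; unfold f, c1, c2. match goal with |- ?l = ?r => change (@eq R l r) end; ring. }
      apply isR_minus; apply isR_scal; unfold P;
        apply (RInt_correct (V:=R_CompleteNormedModule)); apply (ex_param (fun t p => cos t * X al be t p ^ _)); intros; apply contP. }
    apply (is_RInt_unique (V:=R_CompleteNormedModule)) in H1. apply (is_RInt_unique (V:=R_CompleteNormedModule)) in H2. rewrite <- H2, H1. ring. }
  assert (HW : is_RInt W a b 0).
  { replace 0 with (minus (RInt (v al be k b) a b) (RInt (v al be k a) a b)).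
    - apply (is_RInt_derive (V:=R_CompleteNormedModule) (fun th => RInt (v al be k th) a b)).
      + intros x _. apply der_param; auto. intros; apply v_der.
      + intros x _. apply cont_param; auto.
    - rewrite (RInt_ext (v al be k b) (fun _ => 0)).
      rewrite (RInt_ext (v al be k a) (fun _ => 0)).
      rewrite RInt_const. unfold minus, plus, opp, scal; simpl. unfold mult; simpl. ring.
      + intros. unfold v, a. unfold b; rewrite cos_mPI2. rring.
      + intros. unfold v, b. rewrite cos_PI2. rring. }
  apply is_RInt_ext with (fun th => / c2 * (c1 * P al be k th - W th)).
  { intros x _. rewrite <- eqW. match goal with |- ?l = ?r => change (@eq R l r) end; field. unfold c2. apply Rmult_integral_contrapositive_currified; lra. }
  replace ((INR k+1)*(al^2+be^2)*M/(INR k+3)) with (/ c2 * (c1 * M - 0)).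
  2:{ unfold c1, c2. field. lra. }
  apply isR_scal. apply isR_minus; auto. apply isR_scal; auto.
Qed.

Lemma P0 al be : is_RInt (P al be 0) (-(PI/2)) (PI/2) (2*PI).
Proof.
  apply is_RInt_ext with (fun th => PI * cos th).
  { intros x _. unfold P. simpl.
    rewrite (RInt_ext _ (fun _ => cos x)) by (intros; rring).
    rewrite RInt_const. unfold scal; simpl; unfold mult; simpl. replace (PI / 2 - - (PI / 2)) with PI by field. reflexivity. }
  replace (2*PI) with (minus (PI * sin (PI/2)) (PI * sin (-(PI/2)))).
  2:{ rewrite sin_neg, sin_PI2. unfold minus, plus, opp; simpl. ring. }
  apply (is_RInt_derive (V:=R_CompleteNormedModule) (fun t => PI * sin t)).
  - intros x _. auto_derive; auto. ring.
  - intros x _. apply (ex_derive_continuous (K:=R_AbsRing) (V:=R_NormedModule) (fun t => PI * cos t)). auto_derive; auto.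
Qed.

Lemma Pmom al be m : is_RInt (P al be (2*m)) (-(PI/2)) (PI/2)
   (2*PI*(al^2+be^2)^m/(2*INR m+1)).
Proof.
  induction m as [|m IH].
  - simpl. replace (2*PI*1/(2*0+1)) with (2*PI) by field. apply P0.
  - replace (2 * S m)%nat with (S (S (2*m))) by lia.
    pose proof (pos_INR m).
    replace (2 * PI * (al ^ 2 + be ^ 2) ^ S m / (2 * INR (S m) + 1)) with
      ((INR (2*m)+1)*(al^2+be^2)*(2*PI*(al^2+be^2)^m/(2*INR m+1))/(INR (2*m)+3)).
    + apply rec. exact IH.
    + rewrite mult_INR, (S_INR m). simpl (INR 2). simpl pow. match goal with |- ?l = ?r => change (@eq R l r) end. field. split; lra.
Qed.

Ltac rfield := match goal with |- ?l = ?r => change (@eq R l r) end; field.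

Definition fnc (N : nat) (x : R) := (-1) ^ N / INR (fact (2 * N)) * x ^ (2 * N).

Lemma cos_unif r : 0 < r -> forall eps, 0 < eps -> exists N, forall n x,
  (N <= n)%nat -> Rabs x < r -> Rabs (cos x - SP fnc n x) < eps.
Proof.
  intros Hr eps He.
  pose proof (CVN_R_cos fnc eq_refl) as HX.
  set (cv := CVN_R_CVS fnc HX).
  assert (E : forall x, cos x = SFL fnc cv x).
  { intro x; unfold cos, SFL.
    case (cv x) as (x1,HUn); case (exist_cos (Rsqr x)) as (x0,Hcos); intros.
    symmetry; eapply UL_sequence.
    + apply HUn.
    + unfold cos_in, infinite_sum in Hcos; unfold Un_cv in |- *; intros.
      elim (Hcos _ H); intros N0 H1.
      exists N0; intros.
      unfold Rdist in H1; unfold Rdist, SP in |- *.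
      replace (sum_f_R0 (fun k:nat => fnc k x) n) with
        (sum_f_R0 (fun i:nat => cos_n i * Rsqr x ^ i) n).
      * apply H1; assumption.
      * apply sum_eq; intros.
        unfold cos_n, fnc in |- *; apply Rmult_eq_compat_l.
        unfold Rsqr in |- *; rewrite pow_sqr; reflexivity. }
  destruct (CVN_CVU fnc cv (mkposreal r Hr) (HX (mkposreal r Hr)) eps He) as [N HN].
  exists N. intros n x Hn Hx. rewrite E. apply HN; auto.
  unfold Boule; simpl. rewrite Rminus_0_r. exact Hx.
Qed.

Definition cj (j : nat) := (-1) ^ j / INR (fact (2 * j)).

Lemma inner_sum al be n th :
  is_RInt (fun ph => cos th * SP fnc n (X al be th ph)) (-(PI/2)) (PI/2)
    (sum_f_R0 (fun j => cj j * P al be (2*j) th) n).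
Proof.
  assert (HP : forall j, is_RInt (fun ph => cos th * X al be th ph ^ j) (-(PI/2)) (PI/2) (P al be j th)).
  { intro j. unfold P. apply (RInt_correct (V:=R_CompleteNormedModule)).
    apply (ex_param (fun t p => cos t * X al be t p ^ j)). intros; apply contP. }
  induction n as [|n IH]; simpl.
  - apply is_RInt_ext with (fun ph => cj 0 * (cos th * X al be th ph ^ (2*0))).
    { intros. unfold SP, fnc, cj. simpl. rfield. }
    apply isR_scal. apply HP.
  - apply is_RInt_ext with (fun ph => cos th * SP fnc n (X al be th ph) +
        cj (S n) * (cos th * X al be th ph ^ (2 * S n))).
    { intros. unfold SP. simpl sum_f_R0. unfold fnc, cj. set (c := (-1) ^ S n / INR (fact (2 * S n))). rring. }
    apply isR_plus; auto. apply isR_scal, HP.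
Qed.

Lemma outer_sum al be n :
  is_RInt (fun th => sum_f_R0 (fun j => cj j * P al be (2*j) th) n) (-(PI/2)) (PI/2)
    (sum_f_R0 (fun j => cj j * (2*PI*(al^2+be^2)^j/(2*INR j+1))) n).
Proof.
  induction n as [|n IH]; cbn [sum_f_R0].
  - apply isR_scal. apply Pmom.
  - apply isR_plus; auto. apply isR_scal. apply Pmom.
Qed.

Definition Sv (r2 : R) := if Req_EM_T r2 0 then 1 else sin (sqrt r2) / sqrt r2.

Lemma hlim r2 : 0 <= r2 ->
  Un_cv (fun n => sum_f_R0 (fun j => cj j * (2*PI*r2^j/(2*INR j+1))) n) (2*PI*Sv r2).
Proof.
  intros Hr.
  assert (E : forall n, sum_f_R0 (fun j => cj j * (2*PI*r2^j/(2*INR j+1))) n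
     = 2*PI * sum_f_R0 (fun j => sin_n j * r2^j) n).
  { induction n as [|n IH].
    - unfold cj, sin_n. simpl. field.
    - rewrite !tech5, IH. cbv beta. unfold cj, sin_n.
      replace (2 * S n + 1)%nat with (S (2 * S n)) by lia.
      rewrite (fact_simpl (2 * S n)), mult_INR.
      rewrite (S_INR (2 * S n)), (mult_INR 2 (S n)).
      pose proof (INR_fact_lt_0 (2 * S n)). pose proof (pos_INR (S n)).
      set (F := INR (fact (2 * S n))) in *. set (m := INR (S n)) in *.
      simpl (INR 2). field. split; lra. }
  apply is_lim_seq_Reals.
  apply is_lim_seq_ext with (fun n => 2*PI * sum_f_R0 (fun j => sin_n j * r2^j) n).
  { intros; rewrite E; reflexivity. }
  apply (is_lim_seq_scal_l _ (2*PI) (Sv r2)).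
  apply is_lim_seq_Reals.
  unfold Sv. destruct (Req_EM_T r2 0) as [H0|H0].
  - subst r2. intros eps He. exists 0%nat. intros n _.
    replace (sum_f_R0 (fun j => sin_n j * 0 ^ j) n) with 1.
    + unfold Rdist. rewrite Rminus_diag, Rabs_R0. exact He.
    + induction n as [|n IH]; simpl sum_f_R0.
      * unfold sin_n. simpl. field.
      * rewrite <- IH. simpl. ring.
  - assert (Hs : 0 < sqrt r2) by (apply sqrt_lt_R0; lra).
    unfold sin. destruct (exist_sin (Rsqr (sqrt r2))) as [l Hl].
    rewrite Rsqr_sqrt in Hl by lra.
    replace (sqrt r2 * l / sqrt r2) with l by (field; lra).
    exact Hl.
Qed.

Lemma Xbound al be th ph : Rabs (X al be th ph) <= Rabs al + Rabs be.
Proof.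
  unfold X. eapply Rle_trans. apply Rabs_triang.
  rewrite !Rabs_mult.
  pose proof (Rabs_pos al). pose proof (Rabs_pos be).
  assert (Hc : Rabs (cos th) <= 1) by (apply Rabs_le; apply COS_bound).
  assert (Hs : Rabs (sin ph) <= 1) by (apply Rabs_le; apply SIN_bound).
  assert (Hs' : Rabs (sin th) <= 1) by (apply Rabs_le; apply SIN_bound).
  pose proof (Rabs_pos (cos th)). pose proof (Rabs_pos (sin ph)). pose proof (Rabs_pos (sin th)).
  assert (Rabs (cos th) * Rabs (sin ph) <= 1).
  { replace 1 with (1*1) by ring. apply Rmult_le_compat; auto. }
  apply Rplus_le_compat.
  - replace (Rabs al) with (Rabs al * 1) at 2 by ring. apply Rmult_le_compat_l; auto.
  - replace (Rabs be) with (Rabs be * 1) at 2 by ring. apply Rmult_le_compat_l; auto.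
Qed.

Lemma Kint al be : is_RInt (fun th => RInt (fun ph => cos th * cos (X al be th ph)) (-(PI/2)) (PI/2))
   (-(PI/2)) (PI/2) (2*PI*Sv (al^2+be^2)).
Proof.
  set (a := -(PI/2)). set (b := PI/2).
  pose proof PI_RGT_0 as HPI.
  set (K := fun th => RInt (fun ph => cos th * cos (X al be th ph)) a b).
  set (kn := fun n th => RInt (fun ph => cos th * SP fnc n (X al be th ph)) a b).
  set (h := fun n => sum_f_R0 (fun j => cj j * (2*PI*(al^2+be^2)^j/(2*INR j+1))) n).
  assert (Hkn : forall n, is_RInt (kn n) a b (h n)).
  { intro n. apply is_RInt_ext with (fun th => sum_f_R0 (fun j => cj j * P al be (2*j) th) n).
    - intros th _. unfold kn. symmetry. apply (is_RInt_unique (V:=R_CompleteNormedModule)).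
      apply inner_sum.
    - apply outer_sum. }
  assert (Hconv : filterlim kn eventually (locally K)).
  { apply filterlim_locally. intros eps.
    set (r := Rabs al + Rabs be + 1).
    assert (Hr : 0 < r) by (unfold r; pose proof (Rabs_pos al); pose proof (Rabs_pos be); lra).
    assert (He : 0 < eps / (PI + 1)) by (apply Rdiv_lt_0_compat; [apply cond_pos | lra]).
    destruct (cos_unif r Hr _ He) as [N HN].
    exists N. intros n Hn t.
    change (Rabs (kn n t + - K t) < eps).
    unfold kn, K.
    assert (E1 : ex_RInt (fun ph => cos t * SP fnc n (X al be t ph)) a b).
    { eexists. apply inner_sum. }
    assert (E2 : ex_RInt (fun ph => cos t * cos (X al be t ph)) a b).
    { apply (ex_param (fun t p => cos t * cos (X al be t p))). intros. unfold X. c2d. }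
    replace (RInt (fun ph => cos t * SP fnc n (X al be t ph)) a b + - RInt (fun ph => cos t * cos (X al be t ph)) a b)
      with (RInt (fun ph => cos t * SP fnc n (X al be t ph) - cos t * cos (X al be t ph)) a b)
      by exact (RInt_minus _ _ a b E1 E2).
    eapply Rle_lt_trans.
    apply (abs_RInt_le_const _ a b (eps / (PI + 1))).
    - unfold a, b; lra.
    - apply (ex_RInt_minus (V:=R_NormedModule)); auto.
    - intros ph _.
      change (Rabs (cos t * SP fnc n (X al be t ph) - cos t * cos (X al be t ph)) <= eps / (PI + 1)).
      rewrite <- Rmult_minus_distr_l, Rabs_mult.
      rewrite (Rabs_minus_sym (SP fnc n _)).
      replace (eps / (PI + 1)) with (1 * (eps / (PI + 1))) by ring.
      apply Rmult_le_compat; try apply Rabs_pos.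
      + apply Rabs_le; apply COS_bound.
      + left. apply HN; auto. pose proof (Xbound al be t ph). unfold r. lra.
    - pose proof (cond_pos eps).
      unfold a, b. replace (PI / 2 - - (PI / 2)) with PI by field.
      apply Rlt_le_trans with ((PI + 1) * (eps / (PI + 1))).
      + apply Rmult_lt_compat_r; auto. lra.
      + right. field. lra. }
  destruct (filterlim_RInt kn a b eventually _ K h Hkn Hconv) as [If [HIf HK]].
  assert (Hh : filterlim h eventually (locally (2*PI*Sv (al^2+be^2)))).
  { pose proof (hlim (al^2+be^2)) as H. 
    assert (0 <= al^2 + be^2) by nra.
    apply is_lim_seq_Reals in H; auto. }
  assert (If = 2*PI*Sv (al^2+be^2)).
  { apply (filterlim_locally_unique (K:=R_AbsRing) (V:=R_NormedModule) (F:=eventually) h).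
    - exact HIf.
    - exact Hh. }
  subst If. exact HK.
Qed.

Lemma sym_int (f : R -> R) c : ex_RInt f (-c) c ->
  RInt (fun y => f (-y)) (-c) c = RInt f (-c) c.
Proof.
  intros [l Hl].
  rewrite (is_RInt_unique (V:=R_CompleteNormedModule) f _ _ l Hl).
  apply (is_RInt_unique (V:=R_CompleteNormedModule)).
  assert (H1 : is_RInt f (- c) (- - c) l) by (rewrite Ropp_involutive; exact Hl).
  apply is_RInt_comp_opp in H1.
  apply is_RInt_swap in H1.
  apply is_RInt_opp in H1.
  rewrite opp_opp in H1.
  eapply is_RInt_ext. 2: exact H1.
  intros. simpl. unfold opp; simpl. rring.
Qed.

Lemma Jint al be : is_RInt (fun th => RInt (fun ph => cos th * sin (X al be th ph)) (-(PI/2)) (PI/2))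
   (-(PI/2)) (PI/2) 0.
Proof.
  set (c := PI/2).
  pose proof PI_RGT_0 as HPI.
  set (J := fun th => RInt (fun ph => cos th * sin (X al be th ph)) (-c) c).
  assert (cJ : forall th ph, continuity_2d_pt (fun t p => cos t * sin (X al be t p)) th ph).
  { intros. unfold X. c2d. }
  assert (Hodd : forall th, J (- th) = - J th).
  { intro th. unfold J.
    rewrite <- sym_int.
    2:{ apply (ex_param (fun t p => cos t * sin (X al be t p))). exact cJ. }
    transitivity (opp (RInt (fun ph => cos th * sin (X al be th ph)) (-c) c)); [|reflexivity].
    rewrite <- RInt_opp.
    2:{ apply (ex_param (fun t p => cos t * sin (X al be t p))). exact cJ. }
    apply RInt_ext. intros. unfold X, opp; simpl. rewrite cos_neg, !sin_neg.
    replace (al * (cos th * - sin x) + be * - sin th) with (- (al * (cos th * sin x) + be * sin th)) by ring.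
    rewrite sin_neg. rring. }
  assert (EJ : ex_RInt J (-c) c).
  { apply (ex_RInt_continuous (V:=R_CompleteNormedModule)). intros z _.
    apply (cont_param (fun t p => cos t * sin (X al be t p))). unfold c; lra. exact cJ. }
  replace 0 with (RInt J (-c) c).
  - apply (RInt_correct (V:=R_CompleteNormedModule)). exact EJ.
  - assert (H : RInt J (-c) c = - RInt J (-c) c).
    { pose proof (sym_int J c EJ) as S. rewrite <- S at 1.
      rewrite (RInt_ext _ (fun y => opp (J y))).
      - rewrite RInt_opp by exact EJ. reflexivity.
      - intros. rewrite Hodd. reflexivity. }
    lra.
Qed.

Lemma pair_RInt (f g : R -> R) a b : ex_RInt f a b -> ex_RInt g a b ->
  RInt (V := C_R_CompleteNormedModule) (fun x => (f x, g x)) a b = (RInt f a b, RInt g a b).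
Proof.
  intros Hf Hg. apply (is_RInt_unique (V := C_R_CompleteNormedModule)).
  apply (is_RInt_fct_extend_pair (U:=R_NormedModule) (V:=R_NormedModule)); simpl.
  - apply (RInt_correct (V:=R_CompleteNormedModule)); auto.
  - apply (RInt_correct (V:=R_CompleteNormedModule)); auto.
Qed.

Definition al0 lam dH NH n m := 2*PI/lam * (INR (idx_i NH n) * dH - INR (idx_i NH m) * dH).
Definition be0 lam dV NH n m := 2*PI/lam * (INR (idx_j NH n) * dV - INR (idx_j NH m) * dV).

Lemma integrand_eq lam dH dV NH n m phi theta :
  Cmult (RtoC (pdf phi theta)) (Cmult (a_resp lam dH dV NH n phi theta)
     (Cconj (a_resp lam dH dV NH m phi theta))) =
  (cos theta / (2*PI) * cos (X (al0 lam dH NH n m) (be0 lam dV NH n m) theta phi),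
   cos theta / (2*PI) * sin (X (al0 lam dH NH n m) (be0 lam dV NH n m) theta phi)).
Proof.
  unfold a_resp, cexpi, pdf.
  set (p := dot3 (wavevec lam phi theta) (u_pos dH dV NH n)).
  set (q := dot3 (wavevec lam phi theta) (u_pos dH dV NH m)).
  replace (X (al0 lam dH NH n m) (be0 lam dV NH n m) theta phi) with (p - q).
  2:{ unfold p, q, X, al0, be0, dot3, wavevec, u_pos. ring. }
  rewrite cos_minus, sin_minus.
  unfold Cmult, Cconj, RtoC; simpl. f_equal; ring.
Qed.

Lemma sinc_eq lam dH dV NH n m : 0 < lam ->
  sinc (2 * norm3 (sub3 (u_pos dH dV NH n) (u_pos dH dV NH m)) / lam) =
  Sv ((al0 lam dH NH n m)^2 + (be0 lam dV NH n m)^2).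
Proof.
  intros Hl.
  set (A := INR (idx_i NH n) * dH - INR (idx_i NH m) * dH).
  set (Bv := INR (idx_j NH n) * dV - INR (idx_j NH m) * dV).
  assert (HN : norm3 (sub3 (u_pos dH dV NH n) (u_pos dH dV NH m)) = sqrt (A^2 + Bv^2)).
  { unfold norm3, sub3, u_pos, dot3, A, Bv. f_equal. ring. }
  set (q := 2*PI/lam).
  assert (Hq : 0 < q) by (unfold q; pose proof PI_RGT_0; apply Rdiv_lt_0_compat; lra).
  assert (HS : (al0 lam dH NH n m)^2 + (be0 lam dV NH n m)^2 = q^2 * (A^2 + Bv^2)).
  { unfold al0, be0, A, Bv, q. ring. }
  rewrite HN, HS.
  set (D := A^2 + Bv^2).
  assert (HD : 0 <= D) by (unfold D; nra).
  unfold sinc, Sv.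
  rewrite sqrt_mult by nra. rewrite sqrt_pow2 by lra.
  destruct (Req_EM_T (2 * sqrt D / lam) 0) as [H1|H1];
  destruct (Req_EM_T (q^2 * D) 0) as [H2|H2]; auto.
  - exfalso. apply H2.
    assert (sqrt D = 0).
    { apply (Rmult_eq_reg_l (2/lam)). rewrite Rmult_0_r. rewrite <- H1. field. lra.
      apply Rgt_not_eq. apply Rdiv_lt_0_compat; lra. }
    apply sqrt_eq_0 in H; auto. rewrite H; ring.
  - exfalso. apply H1.
    assert (D = 0).
    { apply Rmult_integral in H2. destruct H2 as [H2|H2]; auto.
      exfalso. apply pow_nonzero with q 2%nat in H2; auto; lra. }
    rewrite H, sqrt_0. field. lra.
  - replace (PI * (2 * sqrt D / lam)) with (q * sqrt D) by (unfold q; field; lra).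
    reflexivity.
Qed.

Theorem proposition1 (lam dH dV : R) (NH NV : nat)
  (Hlam : 0 < lam) (HdH : 0 < dH) (HdV : 0 < dV)
  (HNH : (1 <= NH)%nat) (HNV : (1 <= NV)%nat) :
  forall n m : nat, (1 <= n <= NH * NV)%nat -> (1 <= m <= NH * NV)%nat ->
  Rcorr lam dH dV NH n m =
  RtoC (sinc (2 * norm3 (sub3 (u_pos dH dV NH n) (u_pos dH dV NH m)) / lam)).
Proof.
  intros n m _ _.
  rewrite sinc_eq by exact Hlam.
  set (al := al0 lam dH NH n m). set (be := be0 lam dV NH n m).
  unfold Rcorr.
  pose proof PI_RGT_0 as HPI.
  assert (cC : forall th ph, continuity_2d_pt (fun t p => cos t / (2*PI) * cos (X al be t p)) th ph).
  { intros. unfold X, Rdiv. c2d. }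
  assert (cS : forall th ph, continuity_2d_pt (fun t p => cos t / (2*PI) * sin (X al be t p)) th ph).
  { intros. unfold X, Rdiv. c2d. }
  rewrite (RInt_ext (V := C_R_CompleteNormedModule) _
    (fun th => (RInt (fun ph => cos th / (2*PI) * cos (X al be th ph)) (-(PI/2)) (PI/2),
                RInt (fun ph => cos th / (2*PI) * sin (X al be th ph)) (-(PI/2)) (PI/2)))).
  2:{ intros th _.
      rewrite (RInt_ext (V := C_R_CompleteNormedModule) _
        (fun ph => (cos th / (2*PI) * cos (X al be th ph), cos th / (2*PI) * sin (X al be th ph)))).
      2:{ intros; apply integrand_eq. }
      apply pair_RInt.
      - apply (ex_param (fun t p => cos t / (2*PI) * cos (X al be t p))). exact cC.
      - apply (ex_param (fun t p => cos t / (2*PI) * sin (X al be t p))). exact cS. }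
  apply (is_RInt_unique (V := C_R_CompleteNormedModule)).
  apply (is_RInt_fct_extend_pair (U:=R_NormedModule) (V:=R_NormedModule)); simpl.
  - apply is_RInt_ext with (fun th => / (2*PI) * RInt (fun ph => cos th * cos (X al be th ph)) (-(PI/2)) (PI/2)).
    { intros th _. rewrite <- (RInt_scal (V:=R_CompleteNormedModule)).
      - apply RInt_ext. intros. unfold scal; simpl; unfold mult; simpl. rfield. lra.
      - apply (ex_param (fun t p => cos t * cos (X al be t p))). intros; unfold X; c2d. }
    replace (Sv (al * (al * 1) + be * (be * 1))) with (/ (2*PI) * (2*PI*Sv (al^2+be^2))) by (cbn [pow]; field; lra).
    exact (isR_scal _ _ _ _ _ (Kint al be)).
  - apply is_RInt_ext with (fun th => / (2*PI) * RInt (fun ph => cos th * sin (X al be th ph)) (-(PI/2)) (PI/2)).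
    { intros th _. rewrite <- (RInt_scal (V:=R_CompleteNormedModule)).
      - apply RInt_ext. intros. unfold scal; simpl; unfold mult; simpl. rfield. lra.
      - apply (ex_param (fun t p => cos t * sin (X al be t p))). intros; unfold X; c2d. }
    replace 0 with (/ (2*PI) * 0) by ring.
    exact (isR_scal _ _ _ _ _ (Jint al be)).
Qed.
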